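(* Let $W=W_0\supset W_1\supset W_2\supset\cdots$ be a filtered Lie algebra with $\bigcap_{i\ge 0}W_i=0$ and $[W_i,W_j]\subset W_{i+j}$. Let $v^0,v^1,v^2,\dots$ be elements of $W$ such that $v^{q+1}-v^{q}\in W_{q+1}$ for all $q\ge 0$. Put $K_i=W_i\oplus W_i$ for $i\ge 0$ (and $K_i=K_0$ for $i<0$), and define linear maps $\partial_q:K_0\to K_0$ by $\partial_{-1}=0$ and $\partial_q(x,y)=([v^q,y],0)$ for $q\ge 0$. For $r\ge -1$ and integers $p$ let $Z^r_p=\{z\in K_p:\ \partial_r z\in K_{p+r}\}$. Then for every $r\ge 0$ and every $p\ge 0$: if $z\in Z^r_p$ or $z\in Z^{r-1}_p$, then $\partial_r z-\partial_{r-1}z\in Z^{r-1}_{p+r}$.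
   Context: This is the complex used to model normal form computations: the first summand of $K_i$ is the space in which the normal form lives, the second the space of transformations, and $v^q$ is the vector field after $q$ normalization steps. *)

(* Defs.v *)
From HB Require Import structures.
From mathcomp Require Import all_boot all_order all_algebra.
Set Implicit Arguments. Unset Strict Implicit. Unset Printing Implicit Defensive.
Import Order.TTheory GRing.Theory Num.Theory.
Local Open Scope ring_scope.

Definition is_lie_bracket (R : fieldType) (W : lmodType R) (br : W -> W -> W) : Prop :=
  [/\ (forall (a : R) (x y z : W), br (a *: x + y) z = a *: br x z + br y z),
      (forall (a : R) (x y z : W), br x (a *: y + z) = a *: br x y + br x z),
      (forall x : W, br x x = 0) &
      (forall x y z : W, br x (br y z) + br y (br z x) + br z (br x y) = 0)].

Definition is_lie_filtration (R : fieldType) (W : lmodType R) (br : W -> W -> W)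
    (Wf : nat -> {pred W}) : Prop :=
  [/\ (forall i, submod_closed (Wf i)),
      (forall x, x \in Wf 0%N),
      (forall i x, x \in Wf i.+1 -> x \in Wf i),
      (forall x, (forall i, x \in Wf i) -> x = 0) &
      (forall i j x y, x \in Wf i -> y \in Wf j -> br x y \in Wf (i + j)%N)].

Section Complex.
Variables (R : fieldType) (W : lmodType R) (br : W -> W -> W)
  (Wf : nat -> {pred W}) (v : nat -> W).

Definition Kf (i : int) : {pred W * W} :=
  let n := match i with Posz n => n | Negz _ => 0%N end in
  [pred z : W * W | (z.1 \in Wf n) && (z.2 \in Wf n)].

Definition del (q : int) (z : W * W) : W * W :=
  match q with Posz n => (br (v n) z.2, 0) | Negz _ => 0 end.

Definition Zf (r p : int) : {pred W * W} :=
  [pred z | (z \in Kf p) && (del r z \in Kf (p + r))].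

End Complex.

(* Main.v *)
Require Import Defs.
From HB Require Import structures.
From mathcomp Require Import all_boot all_order all_algebra.
Import Order.TTheory GRing.Theory Num.Theory.
Local Open Scope ring_scope.

Lemma br0l (R : fieldType) (W : lmodType R) (br : W -> W -> W) :
  is_lie_bracket br -> forall z, br 0 z = 0.
Proof.
case=> Hl _ _ _ z; have := Hl 1 0 0 z; rewrite !scale1r addr0.
move=> E; apply/esym; have := congr1 (fun t => t - br 0 z) E; rewrite /= subrr addrK; apply.
Qed.

Lemma br0r (R : fieldType) (W : lmodType R) (br : W -> W -> W) :
  is_lie_bracket br -> forall z, br z 0 = 0.
Proof.
case=> _ Hr _ _ z; have := Hr 1 z 0 0; rewrite !scale1r addr0.
move=> E; apply/esym; have := congr1 (fun t => t - br z 0) E; rewrite /= subrr addrK; apply.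
Qed.

Lemma brBl (R : fieldType) (W : lmodType R) (br : W -> W -> W) :
  is_lie_bracket br -> forall x y z, br (x - y) z = br x z - br y z.
Proof.
move=> H x y z; have Hb := @br0l _ _ _ H; case: H => Hl _ _ _.
have HN : br (- y) z = - br y z.
  by have := Hl (-1) y 0 z; rewrite addr0 Hb addr0 !scaleN1r.
have := Hl 1 x (- y) z; rewrite !scale1r HN; apply.
Qed.

Theorem mainTheorem1 (R : fieldType) (W : lmodType R) (br : W -> W -> W)
    (Wf : nat -> {pred W}) (v : nat -> W) :
  is_lie_bracket br ->
  is_lie_filtration br Wf ->
  (forall q : nat, v q.+1 - v q \in Wf q.+1) ->
  forall (r p : nat) (z : W * W),
    (z \in Zf br Wf v r%:Z p%:Z \/ z \in Zf br Wf v (r%:Z - 1) p%:Z) ->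
    del br v r%:Z z - del br v (r%:Z - 1) z \in Zf br Wf v (r%:Z - 1) (p%:Z + r%:Z).
Proof.
move=> Hbr Hf Hv r p [x y] Hz.
have Hb0r := @br0r _ _ _ Hbr; have HbB := @brBl _ _ _ Hbr.
case: Hf => Hsub Hall _ _ Hmul.
have W0 : forall i, (0 : W) \in Wf i by move=> i; case: (Hsub i).
have Hy : y \in Wf p.
  by case: Hz; rewrite /Zf /Kf !inE /= => /and3P [/andP [_ ->] _ _].
case: r Hz => [|n] Hz.
- have -> : (0%:Z - 1 : int) = Negz 0 by [].
  move: Hz; rewrite /Zf /Kf /del !inE /= !addr0 subr0 W0 /= andbT.
  rewrite subr0 !W0 addn0 !andbT.
  case=> [/andP [_ //] | _]; exact: (Hmul 0%N p _ y (Hall (v 0%N)) Hy).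
- have -> : (n.+1%:Z - 1 : int) = n%:Z by rewrite -addn1 PoszD addrK.
  rewrite /Zf /Kf /del !inE /=.
  rewrite subr0 Hb0r !W0 -HbB !andbT addnC.
  exact: (Hmul _ _ _ _ (Hv n) Hy).
Qed.
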